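(* Let $n \ge 1$, $t \ge 1$ and $\ell \ge 1$ be integers. Fix a set of nonterminal symbols $V = \{\mathtt{NT}_1, \dotsc, \mathtt{NT}_n\}$, a distinguished start symbol $S \notin V$, and a terminal alphabet $\Sigma = \{\mathtt{t}_1, \dotsc, \mathtt{t}_t\}$ with $|\Sigma| = t$. Then the number of distinct reduced context-free grammars in Chomsky normal form with start symbol $S$, nonterminals $V$ and terminals $\Sigma$ is at least $2^{n^3 + nt - 2n}$, and the number of distinct strings of length $\ell$ over $\Sigma$ is $t^\ell$.
   Context: A context-free grammar in Chomsky normal form here consists of a finite set of production rules, each either lexical, of the form $A \to a$ with $A \in V$ and $a \in \Sigma$, or nonlexical, of the form $A \to B\,C$ with $A \in \{S\} \cup V$ and $B, C \in V$. Two grammars (over the same fixed $S$, $V$, $\Sigma$) are distinct iff their sets of production rules differ. A grammar is reduced if every nonterminal in $V$ is accessible (appears in some derivation starting from $S$) and productive (derives some string of terminals). *)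

(* Defs.v *)
From Stdlib Require Import Relations.
From mathcomp Require Import all_boot.
From mathcomp Require Import boolp.
Set Implicit Arguments. Unset Strict Implicit. Unset Printing Implicit Defensive.

(* Nonterminals: [option 'I_n], with [None] = the start symbol S and
   [Some i] = NT_(i+1) in V.  Terminals: ['I_t]. *)
Definition nonterm (n : nat) := option 'I_n.

(* Production rules in Chomsky normal form:
   - lexical  [inl (A, a)]     :  A -> a      with A in V, a in Sigma
   - nonlexical [inr (A, B, C)]:  A -> B C    with A in {S} u V, B, C in V *)
Definition rule (n t : nat) : finType :=
  ('I_n * 'I_t + option 'I_n * 'I_n * 'I_n)%type.

Definition grammar (n t : nat) := {set rule n t}.

Definition symbol (n t : nat) := (nonterm n + 'I_t)%type.

Definition lhs {n t : nat} (r : rule n t) : nonterm n :=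
  match r with
  | inl (A, _) => Some A
  | inr (A, _, _) => A
  end.

Definition rhs {n t : nat} (r : rule n t) : seq (symbol n t) :=
  match r with
  | inl (_, a) => [:: inr a]
  | inr (_, B, C) => [:: inl (Some B); inl (Some C)]
  end.

Definition step {n t : nat} (G : grammar n t) (x y : seq (symbol n t)) : Prop :=
  exists (u w : seq (symbol n t)) (r : rule n t),
    r \in G /\ x = u ++ inl (lhs r) :: w /\ y = u ++ rhs r ++ w.

Definition derives {n t : nat} (G : grammar n t) := clos_refl_trans _ (step G).

Definition accessible {n t : nat} (G : grammar n t) (X : nonterm n) : Prop :=
  exists u w, derives G [:: inl None] (u ++ inl X :: w).

Definition productive {n t : nat} (G : grammar n t) (X : nonterm n) : Prop :=
  exists s : seq 'I_t, derives G [:: inl X] (map inr s).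

Definition reduced {n t : nat} (G : grammar n t) : Prop :=
  forall A : 'I_n, accessible G (Some A) /\ productive G (Some A).

(* Main.v *)
Require Import Defs.
From mathcomp Require Import all_boot.
From mathcomp Require Import boolp.
From mathcomp Require Import zify.
From Stdlib Require Import Relations.

Lemma derives_step {n t : nat} (G : grammar n t) x y : step G x y -> derives G x y.
Proof. by move=> h; apply: rt_step. Qed.

Theorem lemma1 (n t l : nat) (hn : 1 <= n) (ht : 1 <= t) (hl : 1 <= l) :
  2 ^ (n ^ 3 + n * t - 2 * n) <= #|[set G : grammar n t | `[< reduced G >]]|
  /\ #|{: l.-tuple 'I_t}| = t ^ l.
Proof.
split; last by rewrite card_tuple card_ord.
pose t0 : 'I_t := Ordinal ht.
pose C : grammar n t := [set (inl (i, t0) : rule n t) | i : 'I_n] :|: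
                         [set (inr (None, i, i) : rule n t) | i : 'I_n].
have redC : forall X : grammar n t, reduced (X :|: C).
  move=> X A; split.
  - exists [::], [:: inl (Some A)]; apply: derives_step.
    exists [::], [::], (inr (None, A, A)); split => //.
    by rewrite !inE; apply/orP; right; apply/orP; right; apply/imsetP; exists A.
  - exists [:: t0]; apply: derives_step.
    exists [::], [::], (inl (A, t0)); split => //.
    by rewrite !inE; apply/orP; right; apply/orP; left; apply/imsetP; exists A.
have cardC : #|C| <= 2 * n.
  rewrite cardsU.
  apply: leq_trans (leq_subr _ _) _.
  rewrite mul2n -addnn; apply: leq_add; apply: (leq_trans (leq_imset_card _ _)); by rewrite card_ord.
have cardR : #|{: rule n t}| = n * t + n.+1 * n * n.
  by rewrite /rule card_sum !card_prod card_option !card_ord.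
have inj : {in powerset (~: C) &, injective (fun X => X :|: C)}.
  move=> X Y; rewrite !inE => /subsetP hX /subsetP hY hXY.
  apply/setP => r.
  have := congr1 (fun S : {set rule n t} => r \in S) hXY => /=; rewrite (in_setU r X C) (in_setU r Y C).
  case rC: (r \in C); last by rewrite !orbF.
  move=> _.
  apply/idP/idP => h.
  - by have := hX _ h; rewrite in_setC rC.
  - by have := hY _ h; rewrite in_setC rC.
apply: leq_trans (_ : #|(fun X => X :|: C) @: powerset (~: C)| <= _).
  rewrite (card_in_imset inj) card_powerset cardsCs setCK cardR.
  rewrite leq_exp2l //.
  have : n ^ 3 <= n.+1 * n * n by rewrite !expnS expn0 muln1 mulnA leq_mul2r leq_mul2r leqnSn !orbT.
  lia.
apply: subset_leq_card; apply/subsetP => G /imsetP [X _ ->].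
by rewrite inE; apply/asboolP; apply: redC.
Qed.
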